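(* Let $k \geq 2$, let $\Delta_k = \{\mathbf{c} \in [0,1]^k : \sum_{i=1}^k c_i = 1\}$, and fix a point $\mathbf{x}$ with conditional class distribution $(p(1|\mathbf{x}),\dots,p(k|\mathbf{x})) \in \Delta_k$ such that $y^* = \arg\max_y p(y|\mathbf{x})$ is unique. Let $q>1$ and consider $$R_{\mathrm{GCE}}(\mathbf{c}) = \sum_{y=1}^k p(y|\mathbf{x})\,\frac{1-c_y^q}{q}, \qquad \mathbf{c} \in \Delta_k.$$ Then the minimizer $f^*_{\mathrm{GCE}}(\mathbf{x})$ of $R_{\mathrm{GCE}}$ over $\Delta_k$ is $\mathbf{e}^{(y^* )}$, where $\mathbf{e}^{(t)}$ denotes the one-hot vector with $\mathbf{e}^{(t)}_j = 1$ iff $j=t$.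
   Context: This is a $k$-class classification setting: a classifier $f$ maps inputs $\mathbf{x}$ to the probability simplex $\Delta_k$, and $p(y|\mathbf{x})$ is the class posterior. The generalized cross entropy loss is $L_{\mathrm{GCE}}(f(\mathbf{x}),y) = \frac{1-f_y(\mathbf{x})^q}{q}$, here used with $q>1$. The optimal classifier $f^*_{\mathrm{GCE}}$ is taken to minimize the pointwise risk $\sum_y L_{\mathrm{GCE}}(f(\mathbf{x}),y)\,p(y|\mathbf{x})$ separately for each $\mathbf{x}$. *)

(* Defs.v *)
From HB Require Import structures.
From mathcomp Require Import all_boot all_order all_algebra.
From mathcomp Require Import all_classical all_reals all_analysis.
Set Implicit Arguments. Unset Strict Implicit. Unset Printing Implicit Defensive.
Import Order.TTheory GRing.Theory Num.Theory.
Local Open Scope ring_scope.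

Definition in_simplex (R : realType) (k : nat) (c : 'I_k -> R) : Prop :=
  (forall i, 0 <= c i <= 1) /\ \sum_(i < k) c i = 1.

Definition onehot (R : realType) (k : nat) (t : 'I_k) : 'I_k -> R :=
  fun j => if j == t then 1 else 0.

Definition R_GCE (R : realType) (k : nat) (p : 'I_k -> R) (q : R)
  (c : 'I_k -> R) : R :=
  \sum_(y < k) p y * ((1 - c y `^ q) / q).

(* Main.v *)
Require Import Defs.
From HB Require Import structures.
From mathcomp Require Import all_boot all_order all_algebra.
From mathcomp Require Import all_classical all_reals all_analysis.
From mathcomp Require Import lra.
Import Order.TTheory GRing.Theory Num.Theory.
Local Open Scope ring_scope.

Lemma powR_le_self (R : realType) (a q : R) : 0 <= a <= 1 -> 1 <= q -> a `^ q <= a.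
Proof.
move=> /andP[a0 a1] q1; have [->|an0] := eqVneq a 0.
  by rewrite powR0 // gt_eqF // (lt_le_trans ltr01).
apply: ge1r_powR => //; rewrite a1 andbT lt_def an0 a0 //.
Qed.

Lemma RGCE_eq (R : realType) (k : nat) (p : 'I_k -> R) (q : R) (c : 'I_k -> R) :
  R_GCE p q c = (\sum_(y < k) p y) / q - (\sum_(y < k) p y * c y `^ q) / q.
Proof.
rewrite /R_GCE !mulr_suml -sumrB; apply: eq_bigr => i _; rewrite mulrA mulrBr mulr1 mulrBl; done.
Qed.

Theorem theorem2 (R : realType) (k : nat) (hk : (2 <= k)%N)
  (p : 'I_k -> R) (hp : in_simplex p) (ystar : 'I_k)
  (hmax : forall y : 'I_k, y != ystar -> p y < p ystar)
  (q : R) (hq : 1 < q) :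
  in_simplex (onehot R ystar) /\
  (forall c : 'I_k -> R, in_simplex c ->
     R_GCE p q (onehot R ystar) <= R_GCE p q c /\
     (R_GCE p q c = R_GCE p q (onehot R ystar) -> c = onehot R ystar)).
Proof.
have q0 : 0 < q by apply: lt_trans hq.
have q1 : 1 <= q by apply: ltW.
have hone : \sum_(y < k) onehot R ystar y = 1.
  rewrite (bigD1 ystar) //= big1 ?addr0 /onehot ?eqxx // => i /negbTE ->//.
have Se : \sum_(y < k) p y * onehot R ystar y `^ q = p ystar.
  rewrite (bigD1 ystar) //= big1 ?addr0 /onehot ?eqxx ?powR1 ?mulr1 //.
  by move=> i /negbTE ->; rewrite powR0 ?mulr0 // gt_eqF.
case: hp => hp01 hp1.
split.
  split=> // i; rewrite /onehot; case: (i == ystar) => //; rewrite ?ler01 ?lexx //.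
move=> c [hc01 hc1].
have hS1 : \sum_(y < k) p y * c y `^ q <= \sum_(y < k) p y * c y.
  apply: ler_sum => i _; apply: ler_wpM2l; first by case/andP: (hp01 i).
  exact: powR_le_self.
have hS2 : \sum_(y < k) p y * c y <= p ystar.
  rewrite -[p ystar]mulr1 -hc1 mulr_sumr; apply: ler_sum => i _.
  apply: ler_wpM2r; first by case/andP: (hc01 i).
  by have [->|/hmax /ltW] := eqVneq i ystar.
rewrite !RGCE_eq Se; split.
  by rewrite lerD2l lerN2 ler_pM2r ?invr_gt0 //; apply: le_trans hS2.
move=> heq.
have hS : \sum_(y < k) p y * c y `^ q = p ystar.
  move/addrI/oppr_inj: heq => /(mulIf _); apply; by rewrite invr_eq0 gt_eqF.
have hnn : forall i : 'I_k, 0 <= (p ystar - p i) * c i.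
  move=> i; apply: mulr_ge0; last by case/andP: (hc01 i).
  by have [->|/hmax /ltW] := eqVneq i ystar; rewrite subr_ge0.
have h0 : \sum_(y < k) (p ystar - p y) * c y = 0.
  apply/eqP; rewrite eq_le; apply/andP; split.
    rewrite (eq_bigr (fun y => p ystar * c y - p y * c y)); last by move=> i _; rewrite mulrBl.
    by rewrite sumrB -mulr_sumr hc1 mulr1 subr_le0 -{1}hS.
  by apply: sumr_ge0 => i _.
have hz : forall y, y != ystar -> c y = 0.
  move=> y hy; have /eqP := psumr_eq0P (fun i _ => hnn i) h0 (i:=y) isT.
  by rewrite mulf_eq0 subr_eq0 (gt_eqF (hmax y hy)) /= => /eqP.
apply: funext => y; rewrite /onehot; case: eqVneq => [->|/hz //].
move: hc1; rewrite (bigD1 ystar) //= big1 ?addr0 // => i; exact: hz.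
Qed.
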